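(* Assume either that $g$ satisfies A1–A4 (and $\mathfrak{D}\subset\mathbb{R}^{m\times d}$ is arbitrary), or that $(g,\mathfrak{D})$ satisfy B1–B4. Then for every $X\in\mathbb{R}^{m\times n}$ and all $D,D'\in\mathfrak{D}$, $$|F_X(D)-F_X(D')|\le L_X(\bar g)\,\|D-D'\|_{1\to2}.$$
   Context: A penalty is a function $g:\mathbb{R}^d\to\mathbb{R}\cup\{+\infty\}$. $\mathcal{L}_x(D,\alpha)=\tfrac12\|x-D\alpha\|_2^2+g(\alpha)$, $f_x(D)=\inf_\alpha\mathcal{L}_x(D,\alpha)$, $F_X(D)=\frac1n\sum_i f_{x_i}(D)$ for $X=[x_1,\dots,x_n]$. $\|\Delta\|_{1\to2}=\max_j\|\delta_j\|_2$. A1: $g\ge0$; A2: $g$ lower semi-continuous; A3: $g(\alpha)\to+\infty$ as $\|\alpha\|\to\infty$; A4: $g(0)=0$. B1: $g=\chi_{\mathcal K}$ is the indicator of a set $\mathcal K$ ($0$ on $\mathcal K$, $+\infty$ outside); B2: there is $\kappa>0$ with $\kappa\|\alpha\|_1^2\le\|D\alpha\|_2^2$ for all $\alpha\in\mathcal K$, $D\in\mathfrak{D}$; B3: $0\in\mathcal K$; B4: $\mathfrak{D}$ convex. $\bar g(t)=\sup\{\|\alpha\|_1: g(\alpha)\le t\}$ under A1–A4, and $\bar g(t)=2\sqrt{2t/\kappa}$ under B1–B4. $L_X(\bar g)=\frac1n\sum_i\|x_i\|_2\,\bar g(\|x_i\|_2^2/2)$. *)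

(* Defs.v *)
From mathcomp Require Import ssreflect ssrfun ssrbool eqtype ssrnat seq fintype.
From Stdlib Require Import Reals ClassicalEpsilon.
Open Scope R_scope.

Inductive Rbar : Type := Fin (r : R) | PInf.

Definition Rbar_le_R (a : Rbar) (t : R) : Prop :=
  match a with Fin r => r <= t | PInf => False end.
Definition R_lt_Rbar (t : R) (a : Rbar) : Prop :=
  match a with Fin r => t < r | PInf => True end.

Definition vec (n : nat) := 'I_n -> R.
Definition mat (m n : nat) := 'I_m -> 'I_n -> R.

Definition sumI {n : nat} (f : 'I_n -> R) : R := foldr Rplus 0 (map f (enum 'I_n)).
Definition maxI {n : nat} (f : 'I_n -> R) : R := foldr Rmax 0 (map f (enum 'I_n)).

Definition norm2 {n : nat} (v : vec n) : R := sqrt (sumI (fun i => v i ^ 2)).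
Definition norm1 {n : nat} (v : vec n) : R := sumI (fun i => Rabs (v i)).

Definition vsub {n : nat} (u v : vec n) : vec n := fun i => u i - v i.
Definition vzero (n : nat) : vec n := fun _ => 0.
Definition msub {m n : nat} (A B : mat m n) : mat m n := fun i j => A i j - B i j.
Definition mulmv {m d : nat} (D : mat m d) (a : vec d) : vec m :=
  fun i => sumI (fun j => D i j * a j).
Definition column {m n : nat} (A : mat m n) (j : 'I_n) : vec m := fun i => A i j.

(* ||Δ||_{1->2} = max_j ||δ_j||_2 (0 when d = 0) *)
Definition norm12 {m d : nat} (A : mat m d) : R := maxI (fun j => norm2 (column A j)).

Definition Lcal {m d : nat} (g : vec d -> Rbar) (x : vec m) (D : mat m d) (a : vec d)
  : Rbar :=
  match g a with
  | Fin r => Fin (/2 * (norm2 (vsub x (mulmv D a))) ^ 2 + r)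
  | PInf => PInf
  end.

Definition is_glb (S : R -> Prop) (r : R) : Prop :=
  (forall v, S v -> r <= v) /\ (forall b, (forall v, S v -> b <= v) -> b <= r).

(* f_x(D) = inf_α L_x(D, α)  (infimum of the finite values; under the
   hypotheses a finite value exists since g(0)=0 / 0 ∈ K) *)
Definition f_x {m d : nat} (g : vec d -> Rbar) (x : vec m) (D : mat m d) : R :=
  epsilon (inhabits 0) (is_glb (fun v => exists a, Lcal g x D a = Fin v)).

Definition F_X {m d n : nat} (g : vec d -> Rbar) (X : mat m n) (D : mat m d) : R :=
  / INR n * sumI (fun k => f_x g (column X k) D).

Definition gbarA {d : nat} (g : vec d -> Rbar) (t : R) : R :=
  epsilon (inhabits 0)
    (is_lub (fun s => exists a, Rbar_le_R (g a) t /\ s = norm1 a)).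

Definition gbarB (kappa t : R) : R := 2 * sqrt (2 * t / kappa).

Definition L_X {m n : nat} (gbar : R -> R) (X : mat m n) : R :=
  / INR n * sumI (fun k => norm2 (column X k) * gbar (norm2 (column X k) ^ 2 / 2)).

Definition hypA1 {d : nat} (g : vec d -> Rbar) : Prop :=
  forall a, match g a with Fin r => 0 <= r | PInf => True end.
(* lower semi-continuity: {α | t < g α} is open for every real t *)
Definition hypA2 {d : nat} (g : vec d -> Rbar) : Prop :=
  forall a t, R_lt_Rbar t (g a) ->
    exists delta, 0 < delta /\
      forall b, norm2 (vsub b a) < delta -> R_lt_Rbar t (g b).
(* coercivity: g(α) -> +oo as ||α|| -> oo *)
Definition hypA3 {d : nat} (g : vec d -> Rbar) : Prop :=
  forall M, exists Rr, forall a, Rr < norm2 a -> R_lt_Rbar M (g a).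
Definition hypA4 {d : nat} (g : vec d -> Rbar) : Prop := g (vzero d) = Fin 0.

Definition hypB1 {d : nat} (g : vec d -> Rbar) (K : vec d -> Prop) : Prop :=
  forall a, g a = (match excluded_middle_informative (K a) with
                   | left _ => Fin 0 | right _ => PInf end).
Definition hypB2 {m d : nat} (K : vec d -> Prop) (kappa : R) (Dset : mat m d -> Prop)
  : Prop :=
  0 < kappa /\
  forall a D, K a -> Dset D -> kappa * (norm1 a) ^ 2 <= (norm2 (mulmv D a)) ^ 2.
Definition hypB3 {d : nat} (K : vec d -> Prop) : Prop := K (vzero d).
Definition hypB4 {m d : nat} (Dset : mat m d -> Prop) : Prop :=
  forall D D' t, Dset D -> Dset D' -> 0 <= t <= 1 ->
    Dset (fun i j => t * D i j + (1 - t) * D' i j).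

(* Main.v *)
Require Import Defs.
From mathcomp Require Import ssreflect ssrfun ssrbool eqtype ssrnat seq fintype.
From Stdlib Require Import Reals ClassicalEpsilon Lra Psatz Lia FunctionalExtensionality.
Open Scope R_scope.


Definition sumL {T : Type} (l : seq T) (f : T -> R) : R := foldr Rplus 0 (map f l).

Lemma sumI_L n (f : 'I_n -> R) : sumI f = @sumL 'I_n (enum 'I_n) f.
Proof. reflexivity. Qed.

Section S.
Context {T : Type}.
Implicit Types (l : seq T) (f h : T -> R).

Lemma sumL_nil f : sumL [::] f = 0. Proof. reflexivity. Qed.
Lemma sumL_cons a l f : sumL (a :: l) f = f a + sumL l f. Proof. reflexivity. Qed.

Lemma sumL_ext l f h : (forall x, f x = h x) -> sumL l f = sumL l h.
Proof. move=> H; elim: l => [|a l IH]; rewrite ?sumL_cons ?IH ?H //. Qed.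

Lemma sumL_add l f h : sumL l (fun x => f x + h x) = sumL l f + sumL l h.
Proof. elim: l => [|a l IH]; rewrite ?sumL_cons ?IH /=; [rewrite /sumL /=|]; lra. Qed.

Lemma sumL_scal l c f : sumL l (fun x => c * f x) = c * sumL l f.
Proof. elim: l => [|a l IH]; rewrite ?sumL_cons ?IH; [rewrite /sumL /=|]; lra. Qed.

Lemma sumL_sub l f h : sumL l (fun x => f x - h x) = sumL l f - sumL l h.
Proof. elim: l => [|a l IH]; rewrite ?sumL_cons ?IH; [rewrite /sumL /=|]; lra. Qed.

Lemma sumL_le l f h : (forall x, f x <= h x) -> sumL l f <= sumL l h.
Proof. move=> H; elim: l => [|a l IH]; rewrite ?sumL_cons; [rewrite /sumL /=; lra|]. have := H a; lra. Qed.

Lemma sumL_nonneg l f : (forall x, 0 <= f x) -> 0 <= sumL l f.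
Proof. move=> H; elim: l => [|a l IH]; rewrite ?sumL_cons; [rewrite /sumL /=; lra|]. have := H a; lra. Qed.

Lemma sumL_abs l f : Rabs (sumL l f) <= sumL l (fun x => Rabs (f x)).
Proof. elim: l => [|a l IH]; rewrite ?sumL_cons; [rewrite /sumL /= Rabs_R0; lra|].
have := Rabs_triang (f a) (sumL l f); lra. Qed.

Lemma sumL_CS l f h :
  sumL l (fun x => f x * h x) <= sqrt (sumL l (fun x => f x ^ 2)) * sqrt (sumL l (fun x => h x ^ 2)).
Proof.
elim: l => [|a l IH]; rewrite ?sumL_cons.
- rewrite !sumL_nil sqrt_0; lra.
- set S := sumL l (fun x => f x ^ 2) in IH *. set U := sumL l (fun x => h x ^ 2) in IH *.
  have HS : 0 <= S by apply: sumL_nonneg => x; apply: pow2_ge_0.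
  have HU : 0 <= U by apply: sumL_nonneg => x; apply: pow2_ge_0.
  have h1 := sqrt_sqrt _ HS. have h2 := sqrt_sqrt _ HU.
  have h3 := sqrt_pos S. have h4 := sqrt_pos U.
  have Ha : 0 <= f a ^ 2 + S by have := pow2_ge_0 (f a); lra.
  have Hb : 0 <= h a ^ 2 + U by have := pow2_ge_0 (h a); lra.
  rewrite -sqrt_mult //.
  apply Rle_trans with (f a * h a + sqrt S * sqrt U); first lra.
  eapply Rle_trans; first apply: Rle_abs.
  rewrite -sqrt_Rsqr_abs; apply: sqrt_le_1_alt.
  rewrite /Rsqr.
  have := pow2_ge_0 (f a * sqrt U - h a * sqrt S).
  move=> Hq. nra.
Qed.
End S.

Lemma sumL_swap {T U : Type} (l : seq T) (l2 : seq U) (F : T -> U -> R) :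
  sumL l (fun i => sumL l2 (fun j => F i j)) = sumL l2 (fun j => sumL l (fun i => F i j)).
Proof. elim: l => [|a l IH]; rewrite ?sumL_cons.
- rewrite /sumL /=; elim: l2 => //= b l2 <-; lra.
- rewrite IH -(sumL_add l2 (fun j => F a j) (fun j => sumL l (fun i => F i j))); reflexivity. Qed.



Lemma sumL_mem {T : eqType} (l : seq T) f x :
  (forall y, 0 <= f y) -> x \in l -> f x <= sumL l f.
Proof.
move=> H; elim: l => [|a l IH] //. rewrite in_cons sumL_cons => /orP [/eqP ->|Hx].
- have := sumL_nonneg l f H; lra.
- have := IH Hx; have := H a; lra.
Qed.

Lemma sumL_sq_abs {T : Type} (l : seq T) f :
  sumL l (fun x => f x ^ 2) <= (sumL l (fun x => Rabs (f x))) ^ 2.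
Proof.
elim: l => [|a l IH]; rewrite ?sumL_cons; first by rewrite /sumL /=; lra.
have H0 := sumL_nonneg l (fun x => Rabs (f x)) (fun x => Rabs_pos (f x)).
have := Rabs_pos (f a). rewrite -(pow2_abs (f a)). nra.
Qed.

Lemma sumI_mem {n} (f : 'I_n -> R) j : (forall y, 0 <= f y) -> f j <= sumI f.
Proof. move=> H; rewrite sumI_L; apply: sumL_mem => //; by rewrite mem_enum. Qed.

Lemma sumI_nonneg {n} (f : 'I_n -> R) : (forall y, 0 <= f y) -> 0 <= sumI f.
Proof. move=> H; rewrite sumI_L; exact: sumL_nonneg. Qed.

Lemma norm2_nonneg {n} (v : vec n) : 0 <= norm2 v.
Proof. exact: sqrt_pos. Qed.

Lemma norm2_sq {n} (v : vec n) : norm2 v ^ 2 = sumI (fun i => v i ^ 2).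
Proof. rewrite /norm2 pow2_sqrt //; apply: sumI_nonneg => y; apply: pow2_ge_0. Qed.

Lemma norm1_nonneg {n} (v : vec n) : 0 <= norm1 v.
Proof. apply: sumI_nonneg => y; apply: Rabs_pos. Qed.

Lemma le_sqrt_of_sq a b : 0 <= b -> a ^ 2 <= b ^ 2 -> a <= b.
Proof. move=> Hb H. destruct (Rle_lt_dec a b) as [|Hlt]; first lra. nra. Qed.

Lemma norm2_le_sq {n} (v : vec n) b : 0 <= b -> sumI (fun i => v i ^ 2) <= b ^ 2 -> norm2 v <= b.
Proof. move=> Hb H; apply: le_sqrt_of_sq => //; by rewrite norm2_sq. Qed.

Lemma sq_le_of_le a b : 0 <= a -> a <= b -> a ^ 2 <= b ^ 2.
Proof. move=> *; nra. Qed.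

Lemma norm2_le_norm1 {n} (v : vec n) : norm2 v <= norm1 v.
Proof. apply: norm2_le_sq; first exact: norm1_nonneg. rewrite /norm1 !sumI_L; exact: sumL_sq_abs. Qed.

Lemma coord_le_norm2 {n} (v : vec n) j : Rabs (v j) <= norm2 v.
Proof.
apply: le_sqrt_of_sq; first exact: norm2_nonneg.
rewrite norm2_sq pow2_abs. apply (sumI_mem (fun i => v i ^ 2) j) => y; apply: pow2_ge_0.
Qed.

Lemma sumI_CS {n} (f h : 'I_n -> R) :
  sumI (fun x => f x * h x) <= sqrt (sumI (fun x => f x ^ 2)) * sqrt (sumI (fun x => h x ^ 2)).
Proof. rewrite !sumI_L; exact: sumL_CS. Qed.

Lemma dot_le {n} (a b : vec n) : sumI (fun i => a i * b i) <= norm2 a * norm2 b.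
Proof. exact: sumI_CS. Qed.

Lemma norm2_add {n} (a b : vec n) : norm2 (fun i => a i + b i) <= norm2 a + norm2 b.
Proof.
apply: norm2_le_sq; first by have := norm2_nonneg a; have := norm2_nonneg b; lra.
have E : sumI (fun i => (a i + b i) ^ 2) =
  sumI (fun i => a i ^ 2) + 2 * sumI (fun i => a i * b i) + sumI (fun i => b i ^ 2).
{ rewrite !sumI_L -sumL_scal -!sumL_add; apply: sumL_ext => x; ring. }
rewrite E -(norm2_sq a) -(norm2_sq b). have := dot_le a b. nra.
Qed.

Lemma norm2_ext {n} (a b : vec n) : (forall i, a i = b i) -> norm2 a = norm2 b.
Proof. move=> H; have -> : a = b by apply: functional_extensionality. done. Qed.

Lemma norm2_sub_le {n} (a b : vec n) : norm2 a <= norm2 (vsub a b) + norm2 b.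
Proof.
have := norm2_add (vsub a b) b. rewrite (norm2_ext (fun i => vsub a b i + b i) a) //.
move=> i; rewrite /vsub; ring.
Qed.

Lemma norm2_scal {n} c (v : vec n) : norm2 (fun i => c * v i) = Rabs c * norm2 v.
Proof.
rewrite /norm2 -(sqrt_pow2 (Rabs c)); last exact: Rabs_pos.
rewrite -sqrt_mult; first last.
- apply: sumI_nonneg => y; apply: pow2_ge_0.
- apply: pow2_ge_0.
- f_equal. rewrite pow2_abs !sumI_L -sumL_scal. apply: sumL_ext => x; ring.
Qed.


Lemma maxL_nonneg {T : Type} (l : seq T) f : 0 <= foldr Rmax 0 (map f l).
Proof. elim: l => [|a l IH] /=; first lra. have := Rmax_r (f a) (foldr Rmax 0 (map f l)); lra. Qed.

Lemma maxL_mem {T : eqType} (l : seq T) f x : x \in l -> f x <= foldr Rmax 0 (map f l).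
Proof.
elim: l => [|a l IH] //=; rewrite in_cons => /orP [/eqP ->|Hx]; first exact: Rmax_l.
have := IH Hx; have := Rmax_r (f a) (foldr Rmax 0 (map f l)); lra.
Qed.

Lemma maxL_scal {T : Type} (l : seq T) f c : 0 <= c ->
  foldr Rmax 0 (map (fun x => c * f x) l) = c * foldr Rmax 0 (map f l).
Proof.
move=> Hc; elim: l => [|a l IH] /=; first ring. rewrite IH.
rewrite /Rmax. case: Rle_dec => H1; case: Rle_dec => H2 //; nra.
Qed.

Lemma maxI_nonneg {n} (f : 'I_n -> R) : 0 <= maxI f.
Proof. exact: maxL_nonneg. Qed.

Lemma maxI_mem {n} (f : 'I_n -> R) j : f j <= maxI f.
Proof. apply: maxL_mem; by rewrite mem_enum. Qed.

Lemma norm12_nonneg {m d} (A : mat m d) : 0 <= norm12 A.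
Proof. exact: maxI_nonneg. Qed.

Lemma column_le_norm12 {m d} (A : mat m d) j : norm2 (column A j) <= norm12 A.
Proof. exact: (maxI_mem (fun j => norm2 (column A j))). Qed.

Lemma norm12_scal {m d} c (A : mat m d) :
  norm12 (fun i j => c * A i j) = Rabs c * norm12 A.
Proof.
rewrite /norm12 /maxI -maxL_scal; last exact: Rabs_pos.
f_equal. apply: eq_map => j. rewrite /column -norm2_scal //.
Qed.

Lemma mulmv_bound {m d} (A : mat m d) (a : vec d) :
  norm2 (mulmv A a) <= norm1 a * norm12 A.
Proof.
set M := norm12 A. have HM : 0 <= M := norm12_nonneg A.
have Hn1 := norm1_nonneg a.
apply: norm2_le_sq; first by apply: Rmult_le_pos.
have row : forall i, mulmv A a i ^ 2 <= norm1 a * sumI (fun j => Rabs (a j) * A i j ^ 2).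
{ move=> i.
  have H1 : Rabs (mulmv A a i) <= sumI (fun j => sqrt (Rabs (a j)) * (sqrt (Rabs (a j)) * Rabs (A i j))).
  { rewrite /mulmv !sumI_L. eapply Rle_trans; first apply: sumL_abs.
    apply: sumL_le => j /=. rewrite -Rmult_assoc (sqrt_sqrt _ (Rabs_pos _)) Rabs_mult; lra. }
  have H2 := sumI_CS (fun j => sqrt (Rabs (a j))) (fun j => sqrt (Rabs (a j)) * Rabs (A i j)).
  have E1 : sumI (fun j => sqrt (Rabs (a j)) ^ 2) = norm1 a.
  { rewrite /norm1 !sumI_L; apply: sumL_ext => j; rewrite pow2_sqrt //; exact: Rabs_pos. }
  have E2 : sumI (fun j => (sqrt (Rabs (a j)) * Rabs (A i j)) ^ 2) = sumI (fun j => Rabs (a j) * A i j ^ 2).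
  { rewrite !sumI_L; apply: sumL_ext => j; rewrite Rpow_mult_distr pow2_sqrt ?pow2_abs //; exact: Rabs_pos. }
  rewrite E1 E2 in H2.
  set W := sumI (fun j => Rabs (a j) * A i j ^ 2) in H2 *.
  have HW : 0 <= W by apply: sumI_nonneg => j; apply: Rmult_le_pos; [apply: Rabs_pos|apply: pow2_ge_0].
  rewrite -pow2_abs. have H3 := Rle_trans _ _ _ H1 H2.
  have := Rabs_pos (mulmv A a i). have := sqrt_sqrt _ Hn1. have := sqrt_sqrt _ HW.
  have := sqrt_pos (norm1 a). have := sqrt_pos W. nra. }
eapply Rle_trans.
{ rewrite sumI_L. apply: sumL_le => i. exact: row. }
rewrite -sumI_L sumI_L sumL_scal -!sumI_L.
have E : sumI (fun i => sumI (fun j => Rabs (a j) * A i j ^ 2)) =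
         sumI (fun j => Rabs (a j) * norm2 (column A j) ^ 2).
{ rewrite !sumI_L sumL_swap; apply: sumL_ext => j. rewrite norm2_sq sumI_L. transitivity (sumL (enum (ordinal m)) (fun i : ordinal m => Rabs (a j) * column A j i ^ 2)); first reflexivity. exact: sumL_scal. }
rewrite E.
have : sumI (fun j => Rabs (a j) * norm2 (column A j) ^ 2) <= norm1 a * M ^ 2.
{ rewrite /norm1 !sumI_L Rmult_comm -sumL_scal. apply: sumL_le => j /=.
  have := column_le_norm12 A j. rewrite -/M. have := norm2_nonneg (column A j). have := Rabs_pos (a j). move=> h1 h2 h3. have h4 := sq_le_of_le _ _ h2 h3. have := Rmult_le_compat_l _ _ _ h1 h4. simpl; lra. }
nra.
Qed.


Lemma glb_exists (S : R -> Prop) : (exists v, S v) -> (forall v, S v -> 0 <= v) ->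
  exists r, is_glb S r.
Proof.
move=> [v0 Hv0] Hlb.
have Hb : bound (fun y => S (- y)) by exists 0 => y Hy; have := Hlb _ Hy; lra.
have Hne : exists y, S (- y) by exists (- v0); rewrite Ropp_involutive.
have [l [Hub Hl]] := completeness _ Hb Hne.
exists (- l); split.
- move=> v Hv. have : - v <= l by apply: Hub; rewrite Ropp_involutive. lra.
- move=> b Hb2. have : l <= - b. { apply: Hl => y Hy. have := Hb2 _ Hy; lra. } lra.
Qed.

Definition gnn {d} (g : vec d -> Rbar) := forall a, match g a with Fin r => 0 <= r | PInf => True end.

Lemma mulmv_zero {m d} (D : mat m d) i : mulmv D (vzero d) i = 0.
Proof.
rewrite /mulmv sumI_L (sumL_ext _ _ (fun j => 0 * D i j)); last by move=> j; rewrite /vzero; ring.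
rewrite sumL_scal; ring.
Qed.

Lemma Lcal_fin {m d} (g : vec d -> Rbar) x (D : mat m d) a r : g a = Fin r ->
  Lcal g x D a = Fin (/2 * norm2 (vsub x (mulmv D a)) ^ 2 + r).
Proof. by rewrite /Lcal => ->. Qed.

Lemma Lcal_inv {m d} (g : vec d -> Rbar) x (D : mat m d) a v : Lcal g x D a = Fin v ->
  exists r, g a = Fin r /\ v = /2 * norm2 (vsub x (mulmv D a)) ^ 2 + r.
Proof. rewrite /Lcal; case: (g a) => [r|] // [<-]; by exists r. Qed.

Section F.
Context {m d : nat} (g : vec d -> Rbar) (Hnn : gnn g) (H0 : g (vzero d) = Fin 0).

Lemma f_glb x (D : mat m d) : is_glb (fun v => exists a, Lcal g x D a = Fin v) (f_x g x D).
Proof.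
rewrite /f_x; apply: epsilon_spec; apply: glb_exists.
- exists (/2 * norm2 (vsub x (mulmv D (vzero d))) ^ 2 + 0); exists (vzero d); exact: Lcal_fin.
- move=> v [a Ha]; have [r [Hr ->]] := Lcal_inv _ _ _ _ _ Ha. have := Hnn a; rewrite Hr => Hr0.
  have := pow2_ge_0 (norm2 (vsub x (mulmv D a))). lra.
Qed.

Lemma f_le x (D : mat m d) a r : g a = Fin r ->
  f_x g x D <= /2 * norm2 (vsub x (mulmv D a)) ^ 2 + r.
Proof. move=> Hr; apply: (proj1 (f_glb x D)); exists a; exact: Lcal_fin. Qed.

Lemma f_approx x (D : mat m d) eps : 0 < eps ->
  exists a r, g a = Fin r /\ /2 * norm2 (vsub x (mulmv D a)) ^ 2 + r < f_x g x D + eps.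
Proof.
move=> He. apply: NNPP => Hn.
have : f_x g x D + eps <= f_x g x D; last lra.
apply: (proj2 (f_glb x D)) => v [a Ha]. have [r [Hr ->]] := Lcal_inv _ _ _ _ _ Ha.
apply: Rnot_lt_le => Hlt; apply: Hn; by exists a, r.
Qed.

Lemma norm2_vsub_zero x (D : mat m d) : norm2 (vsub x (mulmv D (vzero d))) = norm2 x.
Proof. apply: norm2_ext => i; rewrite /vsub mulmv_zero; ring. Qed.

Lemma f_le0 x (D : mat m d) : f_x g x D <= /2 * norm2 x ^ 2.
Proof. have := f_le x D _ _ H0; rewrite norm2_vsub_zero; lra. Qed.

Lemma f_nonneg x (D : mat m d) : 0 <= f_x g x D.
Proof.
apply: (proj2 (f_glb x D)) => v [a Ha]. have [r [Hr ->]] := Lcal_inv _ _ _ _ _ Ha.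
have := Hnn a; rewrite Hr => Hr0. have := pow2_ge_0 (norm2 (vsub x (mulmv D a))). lra.
Qed.

Lemma step x (D D' : mat m d) a r : g a = Fin r ->
  f_x g x D' <= /2 * (norm2 (vsub x (mulmv D a)) + norm1 a * norm12 (msub D D')) ^ 2 + r.
Proof.
move=> Hr. eapply Rle_trans; first exact: (f_le x D' _ _ Hr).
apply: Rplus_le_compat_r; apply: Rmult_le_compat_l; first lra.
apply: sq_le_of_le; first exact: norm2_nonneg.
have E : norm2 (vsub x (mulmv D' a)) =
   norm2 (fun i => vsub x (mulmv D a) i + mulmv (msub D D') a i).
{ apply: norm2_ext => i. rewrite /vsub /mulmv /msub !sumI_L.
  rewrite (sumL_ext _ (fun j => (D i j - D' i j) * a j) (fun j => D i j * a j - D' i j * a j)); last by move=> j; ring.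
  rewrite sumL_sub. lra. }
rewrite E. eapply Rle_trans; first exact: norm2_add.
have := mulmv_bound (msub D D') a. lra.
Qed.
End F.


Lemma segment (phi : R -> R) A B : 0 <= B ->
  (forall s t, 0 <= s <= 1 -> 0 <= t <= 1 -> phi s <= phi t + A * Rabs (s - t) + B * (s - t) ^ 2) ->
  phi 1 <= phi 0 + A.
Proof.
move=> HB H.
have key : forall N : nat, le 1 N -> phi 1 <= phi 0 + A + B / INR N.
{ move=> N HN. have HNpos : 0 < INR N by apply: lt_0_INR; lia.
  set h := / INR N. have Hh : 0 < h by apply: Rinv_0_lt_compat.
  have HNh : INR N * h = 1 by rewrite /h; field; lra.
  have claim : forall k : nat, le k N ->
     phi (INR k * h) <= phi 0 + INR k * (A * h + B * h ^ 2).
  { elim=> [|k IH] Hk.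
    - rewrite /= Rmult_0_l; lra.
    - have Hk' : le k N by lia.
      have := IH Hk'. have Hle : INR (S k) <= INR N by apply: le_INR.
      have Hk0 := pos_INR k.
      rewrite S_INR in Hle *.
      have := H ((INR k + 1) * h) (INR k * h).
      have E1 : (INR k + 1) * h - INR k * h = h by ring.
      rewrite E1 Rabs_right; last lra.
      move=> H1 H2.
      have Hs : 0 <= (INR k + 1) * h <= 1.
      { split; first (apply: Rmult_le_pos; lra). rewrite -HNh. apply: Rmult_le_compat_r; lra. }
      have Ht : 0 <= INR k * h <= 1.
      { split; first (apply: Rmult_le_pos; lra). rewrite -HNh. apply: Rmult_le_compat_r; lra. }
      have := H1 Hs Ht. move=> H3. have -> : (INR k + 1) * (A*h + B*h^2) = INR k * (A*h+B*h^2) + (A*h + B*h^2) by ring. lra. }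
  have := claim N (le_n N). rewrite HNh.
  have -> : INR N * (A * h + B * h ^ 2) = A + B / INR N by rewrite /h; field; lra.
  lra. }
apply: Rnot_lt_le => Hlt.
set del := phi 1 - phi 0 - A.
have Hdel : 0 < del by rewrite /del; lra.
have [N HN] := INR_unbounded (B / del).
have HBd : 0 <= B / del by apply: Rmult_le_pos => //; apply: Rlt_le; apply: Rinv_0_lt_compat.
have HN1 : le 1 N.
{ destruct N as [|N]; last lia. simpl in HN; lra. }
have := key N HN1.
have HNpos : 0 < INR N by lra.
have : B / INR N < del.
{ apply (Rmult_lt_reg_r (INR N)) => //. rewrite /Rdiv Rmult_assoc Rinv_l; last lra.
  have : B < del * INR N.
  { have E : B = B / del * del by field; lra. rewrite {1}E. nra. }
  lra. }
rewrite /del; lra.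
Qed.


Lemma column_bound {m d} (f : mat m d -> R) (P : mat m d -> Prop) c K :
  0 <= K ->
  (forall D D' t, P D -> P D' -> 0 <= t <= 1 -> P (fun i j => t * D i j + (1 - t) * D' i j)) ->
  (forall D D'', P D -> f D'' <= f D + c * norm12 (msub D D'') + K * norm12 (msub D D'') ^ 2) ->
  forall D D', P D -> P D' -> Rabs (f D - f D') <= c * norm12 (msub D D').
Proof.
move=> HK Hconv Hstep D D' HD HD'.
set Dt := fun t : R => (fun i j => t * D' i j + (1 - t) * D i j) : mat m d.
set N' := norm12 (msub D' D).
have HP : forall t, 0 <= t <= 1 -> P (Dt t) by move=> t Ht; exact: Hconv.
have Hn : forall s t, norm12 (msub (Dt t) (Dt s)) = Rabs (s - t) * N'.
{ move=> s t. rewrite Rabs_minus_sym -norm12_scal. f_equal.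
  apply: functional_extensionality => i; apply: functional_extensionality => j.
  rewrite /msub /Dt; ring. }
have E1 : Dt 1 = D'.
{ apply: functional_extensionality => i; apply: functional_extensionality => j. rewrite /Dt; ring. }
have E0 : Dt 0 = D.
{ apply: functional_extensionality => i; apply: functional_extensionality => j. rewrite /Dt; ring. }
have EN : norm12 (msub D D') = N'.
{ rewrite /N'. have := norm12_scal (-1) (msub D' D). rewrite Rabs_Ropp Rabs_R1 Rmult_1_l => <-. f_equal.
  apply: functional_extensionality => i; apply: functional_extensionality => j. rewrite /msub; ring. }
have Hseg : forall s t, 0 <= s <= 1 -> 0 <= t <= 1 ->
   f (Dt s) <= f (Dt t) + (c * N') * Rabs (s - t) + (K * N' ^ 2) * (s - t) ^ 2.
{ move=> s t Hs Ht. have := Hstep (Dt t) (Dt s) (HP t Ht). rewrite Hn Rpow_mult_distr pow2_abs.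
  move=> h; lra. }
have HK2 : 0 <= K * N' ^ 2 by apply: Rmult_le_pos => //; apply: pow2_ge_0.
have A1 := segment (fun t => f (Dt t)) _ _ HK2 Hseg.
have A2 : f (Dt (1 - 1)) <= f (Dt (1 - 0)) + c * N'.
{ apply: (segment (fun t => f (Dt (1 - t))) _ _ HK2) => s t Hs Ht.
  have := Hseg (1 - s) (1 - t). rewrite (_ : 1 - s - (1 - t) = - (s - t)); last ring.
  rewrite Rabs_Ropp. have -> : (- (s - t)) ^ 2 = (s - t) ^ 2 by ring.
  move=> h; apply: h; lra. }
rewrite /= E1 E0 in A1. rewrite Rminus_diag Rminus_0_r E1 E0 in A2.
rewrite EN. apply: Rabs_le; lra.
Qed.


Lemma limit_le Q T C : (forall s, 0 < s <= 1 -> Q <= T + C * s) -> Q <= T.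
Proof.
move=> H. apply: Rnot_lt_le => Hlt. set del := Q - T.
have Hd : 0 < del by rewrite /del; lra.
have HC := Rabs_pos C.
set s := Rmin 1 (del / (2 * (Rabs C + 1))).
have Hq : 0 < del / (2 * (Rabs C + 1)) by apply: Rdiv_lt_0_compat; lra.
have Hs1 : s <= 1 by apply: Rmin_l.
have Hs2 : s <= del / (2 * (Rabs C + 1)) by apply: Rmin_r.
have Hs0 : 0 < s by rewrite /s; apply: Rmin_glb_lt; lra.
have := H s (conj Hs0 Hs1).
have : C * s <= Rabs C * s by apply: Rmult_le_compat_r; [lra|apply: Rle_abs].
have : Rabs C * s <= Rabs C * (del / (2 * (Rabs C + 1))) by apply: Rmult_le_compat_l.
have : Rabs C * (del / (2 * (Rabs C + 1))) < del.
{ have -> : Rabs C * (del / (2 * (Rabs C + 1))) = del * (Rabs C / (2 * (Rabs C + 1))) by field; lra.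
  have : Rabs C / (2 * (Rabs C + 1)) < 1.
  { apply: (Rmult_lt_reg_r (2 * (Rabs C + 1))); first lra.
    rewrite /Rdiv Rmult_assoc Rinv_l; lra. }
  nra. }
rewrite /del; lra.
Qed.

Lemma norm2_vsub_sym {n} (a b : vec n) : norm2 (vsub a b) = norm2 (vsub b a).
Proof.
have := norm2_scal (-1) (vsub b a). rewrite Rabs_Ropp Rabs_R1 Rmult_1_l => <-.
apply: norm2_ext => i; rewrite /vsub; ring.
Qed.

Section B.
Context {m d : nat} (g : vec d -> Rbar) (Dset : mat m d -> Prop) (K : vec d -> Prop) (kappa : R).
Hypothesis HB1 : hypB1 g K.
Hypothesis HB2 : hypB2 K kappa Dset.
Hypothesis HB3 : hypB3 K.

Lemma B_gnn : gnn g.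
Proof. move=> a; rewrite HB1; case: excluded_middle_informative => _ //; lra. Qed.

Lemma B_H0 : g (vzero d) = Fin 0.
Proof. rewrite HB1; case: excluded_middle_informative => // /(_ HB3) []. Qed.

Lemma B_fin a r : g a = Fin r -> K a /\ r = 0.
Proof. rewrite HB1; case: excluded_middle_informative => // HK [<-]; done. Qed.

Lemma B_step x (D D'' : mat m d) : Dset D ->
  let G := gbarB kappa (norm2 x ^ 2 / 2) in
  f_x g x D'' <= f_x g x D + (norm2 x * G) * norm12 (msub D D'') + (G ^ 2 / 2) * norm12 (msub D D'') ^ 2.
Proof.
move=> HD G.
have [Hk HB2'] := HB2.
set N := norm12 (msub D D''). have HN : 0 <= N := norm12_nonneg _.
set x0 := norm2 x. have Hx0 : 0 <= x0 := norm2_nonneg _.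
set k := / sqrt kappa.
have Hsk : 0 < sqrt kappa by apply: sqrt_lt_R0.
have Hk0 : 0 < k by apply: Rinv_0_lt_compat.
have HG : G = 2 * x0 * k.
{ rewrite /G /gbarB. have -> : 2 * (x0 ^ 2 / 2) / kappa = x0 ^ 2 / kappa by field; lra.
  rewrite sqrt_div; [|apply: pow2_ge_0|lra]. rewrite sqrt_pow2 //. rewrite /k /Rdiv; ring. }
have HG0 : 0 <= G by rewrite HG; nra.
set fD := f_x g x D.
have HfD : fD <= /2 * x0 ^ 2 := f_le0 g B_gnn B_H0 x D.
apply: (limit_le _ _ (1/2 + (x0 * k + G + k) * N + (2 * G * k + k ^ 2) * N ^ 2 / 2)) => s [Hs0 Hs1].
have [a [r [Hr Happ]]] := f_approx g B_gnn B_H0 x D (s ^ 2 / 2) ltac:(nra).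
have [HKa Hr0] := B_fin a r Hr. subst r.
have Hst := step g B_gnn B_H0 x D D'' a 0 Hr.
rewrite -/N in Hst.
set rho := norm2 (vsub x (mulmv D a)) in Happ Hst.
have Hrho0 : 0 <= rho := norm2_nonneg _.
have Hrho : rho <= x0 + s.
{ apply: le_sqrt_of_sq; first lra. rewrite -/fD in Happ. nra. }
set n1 := norm1 a.
have Hn1 : 0 <= n1 := norm1_nonneg a.
have HDa : norm2 (mulmv D a) <= x0 + rho.
{ have := norm2_sub_le (mulmv D a) x. rewrite norm2_vsub_sym -/rho -/x0; lra. }
have Hkap := HB2' a D HKa HD. rewrite -/n1 in Hkap.
have Hn1b : n1 <= G + s * k.
{ have H1 : sqrt kappa * n1 <= 2 * x0 + s.
  { apply: le_sqrt_of_sq; first lra. rewrite Rpow_mult_distr pow2_sqrt; last lra.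
    have := norm2_nonneg (mulmv D a). nra. }
  rewrite HG. have -> : n1 = k * (sqrt kappa * n1) by rewrite /k; field; lra.
  nra. }
have E1 : / 2 * (rho + n1 * N) ^ 2 + 0 = / 2 * rho ^ 2 + rho * (n1 * N) + / 2 * (n1 * N) ^ 2.
{ field. }
rewrite E1 in Hst.
have T1 : rho * (n1 * N) <= (x0 + s) * ((G + s * k) * N).
{ apply: Rmult_le_compat => //; try nra. }
have T2 : (n1 * N) ^ 2 <= ((G + s * k) * N) ^ 2.
{ apply: sq_le_of_le; nra. }
have T3 : (x0 + s) * ((G + s * k) * N) <= x0 * G * N + s * ((x0 * k + G + k) * N).
{ have h : s * k * s * N <= s * k * N.
  { apply: Rmult_le_compat_r => //. have : s * k * s <= s * k * 1 by apply: Rmult_le_compat_l; nra. lra. }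
  nra. }
have T4 : ((G + s * k) * N) ^ 2 <= G ^ 2 * N ^ 2 + s * ((2 * G * k + k ^ 2) * N ^ 2).
{ have h : s * s * (k ^ 2) * N ^ 2 <= s * (k ^ 2) * N ^ 2.
  { apply: Rmult_le_compat_r; first apply: pow2_ge_0.
    have : s * s * k ^ 2 <= s * 1 * k ^ 2; last lra.
    apply: Rmult_le_compat_r; first apply: pow2_ge_0. apply: Rmult_le_compat_l; lra. }
  nra. }
have T5 : s ^ 2 / 2 <= s / 2 by nra.
rewrite -/fD in Happ. nra.
Qed.
End B.


Definition cvg (u : nat -> R) (L : R) : Prop :=
  forall eps, 0 < eps -> exists N : nat, forall n : nat, le N n -> Rabs (u n - L) < eps.

Definition sinc (phi : nat -> nat) : Prop := forall n, lt (phi n) (phi (S n)).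

Lemma sinc_lt phi : sinc phi -> forall a b, lt a b -> lt (phi a) (phi b).
Proof. move=> H a; elim=> [|b IH] Hab; first lia. have := H b. case: (Nat.eq_dec a b) => [->|Hne]; first lia.
have := IH ltac:(lia). lia. Qed.

Lemma sinc_ge phi : sinc phi -> forall n, le n (phi n).
Proof. move=> H; elim=> [|n IH]; first lia. have := H n; lia. Qed.

Lemma sinc_comp phi psi : sinc phi -> sinc psi -> sinc (fun n => phi (psi n)).
Proof. move=> H1 H2 n; apply: (sinc_lt _ H1); exact: H2. Qed.

Lemma cvg_sub u L phi : cvg u L -> sinc phi -> cvg (fun n => u (phi n)) L.
Proof.
move=> H Hp e He; have [N HN] := H e He; exists N => n Hn; apply: HN.
have := sinc_ge _ Hp n; lia.
Qed.

Lemma small_inv eps : 0 < eps -> exists N : nat, forall n : nat, le N n -> / (INR n + 1) < eps.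
Proof.
move=> He; have [N HN] := INR_unbounded (/ eps). exists N => n Hn.
have H1 := le_INR _ _ Hn. have Hpos : 0 < INR n + 1 by have := pos_INR n; lra.
rewrite -(Rinv_inv eps). apply: Rinv_lt_contravar; first (apply: Rmult_lt_0_compat => //; apply: Rinv_0_lt_compat => //).
lra.
Qed.

Lemma BW1 (u : nat -> R) B : (forall n, Rabs (u n) <= B) ->
  exists psi L, sinc psi /\ cvg (fun n => u (psi n)) L.
Proof.
move=> Hb.
have Hin : forall n, (fun c => - B <= c <= B) (u n).
{ move=> n /=. have := Hb n. have := Rle_abs (u n). have := Rle_abs (- u n). rewrite Rabs_Ropp. lra. }
have [l Hl] := Bolzano_Weierstrass u _ (compact_P3 (- B) B) Hin.
have Hex : forall (N k : nat), exists p : nat, le N p /\ Rabs (u p - l) < / (INR k + 1).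
{ move=> N k. have Hk : 0 < / (INR k + 1) by apply: Rinv_0_lt_compat; have := pos_INR k; lra.
  have Hnb : neighbourhood (fun y => Rabs (y - l) < / (INR k + 1)) l.
  { exists (mkposreal _ Hk) => y. rewrite /disc /=. done. }
  have [p [Hp1 Hp2]] := Hl (fun y => Rabs (y - l) < / (INR k + 1)) N Hnb.
  by exists p. }
pose next := fun N k => proj1_sig (constructive_indefinite_description _ (Hex N k)).
have Hnext : forall N k, le N (next N k) /\ Rabs (u (next N k) - l) < / (INR k + 1).
{ move=> N k. rewrite /next. exact: (proj2_sig (constructive_indefinite_description _ (Hex N k))). }
pose psi := fix psi (n : nat) : nat := match n with 0%nat => next 0%nat 0%nat | S n => next (S (psi n)) (S n) end.
exists psi, l. split.
- move=> n /=. have := proj1 (Hnext (S (psi n)) (S n)). lia.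
- move=> e He. have [N HN] := small_inv _ He. exists N => n Hn.
  have H1 : Rabs (u (psi n) - l) < / (INR n + 1).
  { case: n Hn => [|n] Hn /=; first exact: (proj2 (Hnext 0%nat 0%nat)).
    exact: (proj2 (Hnext _ _)). }
  have := HN n Hn. lra.
Qed.

Lemma BWvec {d} (u : nat -> vec d) B : (forall n j, Rabs (u n j) <= B) ->
  forall l : seq 'I_d, exists phi (lim : vec d), sinc phi /\
     forall j, j \in l -> cvg (fun n => u (phi n) j) (lim j).
Proof.
move=> Hb; elim=> [|j0 l [phi [lim [Hphi IH]]]].
- exists (fun n : nat => n), (vzero d); split => // n /=; lia.
- have [psi [L [Hpsi HL]]] := BW1 (fun n => u (phi n) j0) B (fun n => Hb _ _).
  exists (fun n => phi (psi n)), (fun j => if j == j0 then L else lim j). split.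
  + exact: sinc_comp.
  + move=> j. case: eqP => [-> _|Hne]; first exact: HL.
    rewrite in_cons => /orP [/eqP E|Hj]; first by case: Hne.
    exact: (cvg_sub _ _ _ (IH j Hj) Hpsi).
Qed.


Lemma sum_cvg0 {d} (w : nat -> vec d) : (forall j, cvg (fun n => w n j) 0) ->
  forall l : seq 'I_d, cvg (fun n => sumL l (fun j => Rabs (w n j))) 0.
Proof.
move=> H; elim=> [|j0 l IH].
- move=> e He; exists 0%nat => n _. rewrite /sumL /= Rminus_0_r Rabs_R0. done.
- move=> e He. have He2 : 0 < e / 2 by lra.
  have [N1 H1] := H j0 _ He2. have [N2 H2] := IH _ He2.
  exists (Nat.max N1 N2) => n Hn. rewrite sumL_cons.
  have := H1 n ltac:(lia). have := H2 n ltac:(lia).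
  rewrite !Rminus_0_r. have := sumL_nonneg l (fun j => Rabs (w n j)) (fun j => Rabs_pos _).
  move=> h0 h2 h1.
  rewrite Rabs_right; last (apply: Rle_ge; have := Rabs_pos (w n j0); lra).
  rewrite Rabs_right in h2; last lra. lra.
Qed.

Lemma rho_lip {m d} x (D : mat m d) a b :
  norm2 (vsub x (mulmv D a)) <= norm2 (vsub x (mulmv D b)) + norm1 (vsub b a) * norm12 D.
Proof.
have E : norm2 (vsub x (mulmv D a)) = norm2 (fun i => vsub x (mulmv D b) i + mulmv D (vsub b a) i).
{ apply: norm2_ext => i. rewrite /vsub /mulmv !sumI_L.
  rewrite (sumL_ext _ (fun j => D i j * (b j - a j)) (fun j => D i j * b j - D i j * a j)); last by move=> j; ring.
  rewrite sumL_sub. lra. }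
rewrite E. eapply Rle_trans; first exact: norm2_add.
have := mulmv_bound D (vsub b a). lra.
Qed.

Section A.
Context {m d : nat} (g : vec d -> Rbar).
Hypothesis HA1 : hypA1 g.
Hypothesis HA2 : hypA2 g.
Hypothesis HA3 : hypA3 g.
Hypothesis HA4 : hypA4 g.

Lemma A_gnn : gnn g. Proof. exact: HA1. Qed.
Lemma A_H0 : g (vzero d) = Fin 0. Proof. exact: HA4. Qed.

Lemma A_min x (D : mat m d) :
  exists a r, g a = Fin r /\ / 2 * norm2 (vsub x (mulmv D a)) ^ 2 + r <= f_x g x D.
Proof.
set f := f_x g x D.
have Hex : forall n : nat, exists a, exists r, g a = Fin r /\
    / 2 * norm2 (vsub x (mulmv D a)) ^ 2 + r < f + / (INR n + 1).
{ move=> n. apply: (f_approx g A_gnn A_H0). apply: Rinv_0_lt_compat; have := pos_INR n; lra. }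
pose al := fun n => proj1_sig (constructive_indefinite_description _ (Hex n)).
have Hal : forall n, exists r, g (al n) = Fin r /\
    / 2 * norm2 (vsub x (mulmv D (al n))) ^ 2 + r < f + / (INR n + 1).
{ move=> n. exact: (proj2_sig (constructive_indefinite_description _ (Hex n))). }
have Hf0 : f <= / 2 * norm2 x ^ 2 := f_le0 g A_gnn A_H0 x D.
have [Rr HRr] := HA3 (/ 2 * norm2 x ^ 2 + 1).
have Hbd : forall n j, Rabs (al n j) <= Rr.
{ move=> n j. eapply Rle_trans; first exact: coord_le_norm2.
  apply: Rnot_lt_le => Hlt. have := HRr _ Hlt. have [r [Hr Hq]] := Hal n. rewrite Hr /=.
  have := pow2_ge_0 (norm2 (vsub x (mulmv D (al n)))).
  have : / (INR n + 1) <= 1.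
  { rewrite -Rinv_1. apply: Rinv_le_contravar; first lra. have := pos_INR n; lra. }
  lra. }
have [phi [lim [Hphi Hcv]]] := BWvec al Rr Hbd (enum 'I_d).
set rs := norm2 (vsub x (mulmv D lim)).
have Hrs0 : 0 <= rs := norm2_nonneg _.
apply: NNPP => Hn.
have [eta [Heta Ht]] : exists eta, 0 < eta /\ R_lt_Rbar (f - / 2 * rs ^ 2 + eta) (g lim).
{ case E : (g lim) => [r|].
  - exists ((/ 2 * rs ^ 2 + r - f) / 2). have : f < / 2 * rs ^ 2 + r.
    { apply: Rnot_le_lt => Hle; apply: Hn; by exists lim, r. }
    move=> h; split; rewrite /=; lra.
  - exists 1; split => //; lra. }
have [del [Hdel Hdb]] := HA2 lim _ Ht.
set ND := norm12 D. have HND : 0 <= ND := norm12_nonneg D.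
set c := (rs + 1) * (ND + 1). have Hc : 0 < c by rewrite /c; nra.
set th := Rmin del (eta / (2 * c)).
have Hth : 0 < th by rewrite /th; apply: Rmin_glb_lt => //; apply: Rdiv_lt_0_compat; lra.
have Hw : forall j, cvg (fun n => vsub (al (phi n)) lim j) 0.
{ move=> j e He. have [N HN] := Hcv j (mem_enum _ _) e He. exists N => n Hn0.
  rewrite /vsub Rminus_0_r. exact: (HN n Hn0). }
have [N1 HN1] := sum_cvg0 _ Hw (enum 'I_d) _ Hth.
have [N2 HN2] := small_inv (eta / 2) ltac:(lra).
set n := Nat.max N1 N2.
set b := al (phi n).
have Hn1 : norm1 (vsub b lim) < th.
{ have := HN1 n ltac:(lia). rewrite Rminus_0_r Rabs_right; first done.
  apply: Rle_ge; apply: sumL_nonneg => j; apply: Rabs_pos. }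
have [rb [Hrb Hqb]] := Hal (phi n).
rewrite -/b in Hrb Hqb.
have Hinv : / (INR (phi n) + 1) < eta / 2.
{ apply: HN2. have := sinc_ge _ Hphi n. lia. }
have Hlt : R_lt_Rbar (f - / 2 * rs ^ 2 + eta) (g b).
{ apply: Hdb. eapply Rle_lt_trans; first exact: norm2_le_norm1.
  have : th <= del by apply: Rmin_l. lra. }
rewrite Hrb /= in Hlt.
set rb' := norm2 (vsub x (mulmv D b)) in Hqb.
have Hrb0 : 0 <= rb' := norm2_nonneg _.
set e := norm1 (vsub b lim) * ND.
have Hlip : rs <= rb' + e := rho_lip x D lim b.
have He0 : 0 <= e by apply: Rmult_le_pos => //; exact: norm1_nonneg.
have Hq : / 2 * rb' ^ 2 >= / 2 * rs ^ 2 - rs * e.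
{ case: (Rle_lt_dec e rs) => h.
  - have : rs - e <= rb' by lra. move=> h2. have h3 : (rs - e) ^ 2 <= rb' ^ 2 by apply: sq_le_of_le; lra. nra.
  - nra. }
have Hre : rs * e < eta / 2.
{ have Hth2 : th <= eta / (2 * c) by apply: Rmin_r.
  have hn1 := norm1_nonneg (vsub b lim).
  have : rs * e <= c * norm1 (vsub b lim).
  { rewrite /e /c. have : rs * ND <= (rs + 1) * (ND + 1) by nra. nra. }
  have : c * norm1 (vsub b lim) < c * (eta / (2 * c)).
  { apply: Rmult_lt_compat_l => //. lra. }
  have -> : c * (eta / (2 * c)) = eta / 2 by field; lra.
  lra. }
lra.
Qed.

Lemma gbarA_spec t : 0 <= t ->
  is_lub (fun s => exists a, Rbar_le_R (g a) t /\ s = norm1 a) (gbarA g t).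
Proof.
move=> Ht. rewrite /gbarA. apply: epsilon_spec.
have [Rr HRr] := HA3 t.
have Hb : bound (fun s => exists a, Rbar_le_R (g a) t /\ s = norm1 a).
{ exists (sumI (fun _ : 'I_d => Rr)) => s [a [Ha ->]].
  rewrite /norm1 !sumI_L; apply: sumL_le => j.
  eapply Rle_trans; first exact: coord_le_norm2.
  apply: Rnot_lt_le => Hlt. have := HRr _ Hlt. case: (g a) Ha => [r|] //= ; lra. }
have Hne : exists s, exists a, Rbar_le_R (g a) t /\ s = norm1 a.
{ exists (norm1 (vzero d)), (vzero d). rewrite HA4 /=. by split. }
have [l Hl] := completeness _ Hb Hne. by exists l.
Qed.

Lemma A_step x (D D'' : mat m d) :
  let G := gbarA g (norm2 x ^ 2 / 2) in
  f_x g x D'' <= f_x g x D + (norm2 x * G) * norm12 (msub D D'') + (G ^ 2 / 2) * norm12 (msub D D'') ^ 2.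
Proof.
move=> G.
have [a [r [Hr Hle]]] := A_min x D.
set fD := f_x g x D in Hle *.
have Hf0 : fD <= / 2 * norm2 x ^ 2 := f_le0 g A_gnn A_H0 x D.
have Hr0 : 0 <= r by have := HA1 a; rewrite Hr.
set rho := norm2 (vsub x (mulmv D a)) in Hle.
have Hrho0 : 0 <= rho := norm2_nonneg _.
set x0 := norm2 x. have Hx0 : 0 <= x0 := norm2_nonneg _.
rewrite -/x0 -/fD in Hf0.
have Hrho : rho <= x0.
{ apply: le_sqrt_of_sq => //. lra. }
have Hn1 : norm1 a <= G.
{ have [Hub _] := gbarA_spec (norm2 x ^ 2 / 2) ltac:(have := pow2_ge_0 (norm2 x); lra).
  apply: Hub. exists a; split => //. rewrite Hr /= -/x0. have := pow2_ge_0 rho. move=> ?. nra. }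
have Hn10 := norm1_nonneg a.
set N := norm12 (msub D D''). have HN : 0 <= N := norm12_nonneg _.
have Hst := step g A_gnn A_H0 x D D'' a r Hr. rewrite -/N -/rho in Hst.
have E1 : / 2 * (rho + norm1 a * N) ^ 2 + r = (/ 2 * rho ^ 2 + r) + rho * (norm1 a * N) + / 2 * (norm1 a * N) ^ 2 by field.
rewrite E1 in Hst.
have T1 : rho * (norm1 a * N) <= x0 * (G * N).
{ apply: Rmult_le_compat => //; try nra. }
have T2 : (norm1 a * N) ^ 2 <= (G * N) ^ 2 by apply: sq_le_of_le; nra.
nra.
Qed.
End A.


Lemma assemble {m d n} (g : vec d -> Rbar) (gbar : R -> R) (X : mat m n) (D D' : mat m d) :
  (forall k, Rabs (f_x g (column X k) D - f_x g (column X k) D') <=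
      (norm2 (column X k) * gbar (norm2 (column X k) ^ 2 / 2)) * norm12 (msub D D')) ->
  Rabs (F_X g X D - F_X g X D') <= L_X gbar X * norm12 (msub D D').
Proof.
move=> H.
have Hinv : 0 <= / INR n.
{ case: n X H => [|n] X H; first by rewrite /= Rinv_0; lra.
  apply: Rlt_le; apply: Rinv_0_lt_compat; apply: lt_0_INR; lia. }
rewrite /F_X /L_X -Rmult_minus_distr_l Rabs_mult Rabs_right; last lra.
rewrite Rmult_assoc. apply: Rmult_le_compat_l => //.
rewrite !sumI_L -sumL_sub Rmult_comm -sumL_scal.
eapply Rle_trans; first exact: sumL_abs.
apply: sumL_le => k /=. rewrite Rmult_comm. exact: H.
Qed.

Theorem mainTheorem9 (m d : nat) (g : vec d -> Rbar) :
  (hypA1 g -> hypA2 g -> hypA3 g -> hypA4 g ->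
     forall (n : nat) (X : mat m n) (D D' : mat m d),
       Rabs (F_X g X D - F_X g X D') <= L_X (gbarA g) X * norm12 (msub D D'))
  /\
  (forall (Dset : mat m d -> Prop) (K : vec d -> Prop) (kappa : R),
     hypB1 g K -> hypB2 K kappa Dset -> hypB3 K -> hypB4 Dset ->
     forall (n : nat) (X : mat m n) (D D' : mat m d),
       Dset D -> Dset D' ->
       Rabs (F_X g X D - F_X g X D') <= L_X (gbarB kappa) X * norm12 (msub D D')).
Proof.
split.
- move=> HA1 HA2 HA3 HA4 n X D D'. apply: assemble => k.
  set x := column X k. set G := gbarA g (norm2 x ^ 2 / 2).
  apply: (column_bound (fun D0 => f_x g x D0) (fun _ => True) (norm2 x * G) (G ^ 2 / 2)) => //.
  + have := pow2_ge_0 G; lra.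
  + move=> D0 D1 _. exact: (A_step g HA1 HA2 HA3 HA4 x D0 D1).
- move=> Dset K kappa HB1 HB2 HB3 HB4 n X D D' HD HD'. apply: assemble => k.
  set x := column X k. set G := gbarB kappa (norm2 x ^ 2 / 2).
  apply: (column_bound (fun D0 => f_x g x D0) Dset (norm2 x * G) (G ^ 2 / 2)) => //.
  + have := pow2_ge_0 G; lra.
  + move=> D0 D1 HD0. exact: (B_step g Dset K kappa HB1 HB2 HB3 x D0 D1 HD0).
Qed.
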